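(* Let $R_1, Q_1,\dots,Q_s\in\mathbb{P}^1$ with $Q_1,\dots,Q_s$ distinct, let $P_{1j}=R_1\times Q_j$, and let $Z=\{(P_{11};m_{11}),\dots,(P_{1s};m_{1s})\}$ be a fat point scheme (so its support lies on the line defined by a form of degree $(1,0)$). Let $m=\max_j m_{1j}$ and for $h=0,\dots,m-1$ put $a_h=\sum_{j=1}^s (m_{1j}-h)_+$, where $(n)_+=\max\{0,n\}$. Then for all $(i,j)\in\mathbb{N}^2$, $$H_Z(i,j)=\sum_{h=0}^{\min\{i,\,m-1\}}\min\{j+1,\,a_h\}.$$ (Equivalently, written as a matrix with rows indexed by $i$ and columns by $j$, $H_Z$ is the sum over $h=0,\dots,m-1$ of the matrix that is zero in rows $0,\dots,h-1$ and whose every row $i\ge h$ is $(1,2,\dots,a_h-1,a_h,a_h,\dots)$.)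
   Context: $\mathbf{k}$ is algebraically closed, $R=\mathbf{k}[x_0,x_1,y_0,y_1]$ bigraded with $\deg x_i=(1,0)$, $\deg y_i=(0,1)$. A point $P=[a_0:a_1]\times[b_0:b_1]$ has ideal $\wp_P=(a_1x_0-a_0x_1,b_1y_0-b_0y_1)$; a fat point scheme $Z=\{(P_1;m_1),\dots,(P_s;m_s)\}$ (distinct points, positive integers $m_i$) has ideal $I_Z=\bigcap\wp_{P_i}^{m_i}$ and Hilbert function $H_Z(i,j)=\dim_{\mathbf{k}}(R/I_Z)_{(i,j)}$. *)

(* Defs.v *)
From HB Require Import structures.
From mathcomp Require Import all_boot all_algebra.
From mathcomp Require Import mpoly.
Set Implicit Arguments. Unset Strict Implicit. Unset Printing Implicit Defensive.
Import GRing.Theory.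
Local Open Scope ring_scope.

(* R = k[x0,x1,y0,y1] encoded as {mpoly k[4]}: variables 0,1 = x0,x1 ; 2,3 = y0,y1 *)
Section Defs.
Variable k : closedFieldType.

Definition vx0 : {mpoly k[4]} := 'X_(@Ordinal 4 0 isT).
Definition vx1 : {mpoly k[4]} := 'X_(@Ordinal 4 1 isT).
Definition vy0 : {mpoly k[4]} := 'X_(@Ordinal 4 2 isT).
Definition vy1 : {mpoly k[4]} := 'X_(@Ordinal 4 3 isT).

Definition bihomog (i j : nat) (f : {mpoly k[4]}) : bool :=
  all (fun mo : 'X_{1..4} =>
         (mo (@Ordinal 4 0 isT) + mo (@Ordinal 4 1 isT) == i)%N &&
         (mo (@Ordinal 4 2 isT) + mo (@Ordinal 4 3 isT) == j)%N) (msupp f).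

(* Generators of the ideal of the point P = [a0:a1] x [b0:b1] *)
Definition ptL1 (a0 a1 : k) : {mpoly k[4]} := a1 *: vx0 - a0 *: vx1.
Definition ptL2 (b0 b1 : k) : {mpoly k[4]} := b1 *: vy0 - b0 *: vy1.

(* f \in (wp_P)^m, wp_P = (L1, L2): (L1,L2)^m is generated by L1^t L2^(m-t), t = 0..m *)
Definition in_pt_ideal_pow (a0 a1 b0 b1 : k) (m : nat) (f : {mpoly k[4]}) : Prop :=
  exists g : 'I_m.+1 -> {mpoly k[4]},
    f = \sum_(t < m.+1) g t * (ptL1 a0 a1) ^+ t * (ptL2 b0 b1) ^+ (m - t).

Definition lin_indep_mod (I : {mpoly k[4]} -> Prop) (n : nat)
    (f : 'I_n -> {mpoly k[4]}) : Prop :=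
  forall c : 'I_n -> k, I (\sum_(l < n) c l *: f l) -> forall l, c l = 0.

Definition quot_dim_is (I : {mpoly k[4]} -> Prop) (i j n : nat) : Prop :=
  (exists f : 'I_n -> {mpoly k[4]}, (forall l, bihomog i j (f l)) /\ lin_indep_mod I f) /\
  (forall f : 'I_n.+1 -> {mpoly k[4]}, (forall l, bihomog i j (f l)) -> ~ lin_indep_mod I f).

Definition P1pt (a0 a1 : k) : bool := (a0 != 0) || (a1 != 0).
Definition P1distinct (a0 a1 b0 b1 : k) : bool := a0 * b1 - a1 * b0 != 0.

Definition fat_ideal (s : nat) (r0 r1 : k) (q0 q1 : 'I_s -> k) (m : 'I_s -> nat)
    (f : {mpoly k[4]}) : Prop :=
  forall t : 'I_s, in_pt_ideal_pow r0 r1 (q0 t) (q1 t) (m t) f.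

Definition hilb_is (s : nat) (r0 r1 : k) (q0 q1 : 'I_s -> k) (m : 'I_s -> nat)
    (i j n : nat) : Prop := quot_dim_is (fat_ideal r0 r1 q0 q1 m) i j n.

End Defs.

(* Main.v *)
Require Import Defs.
From HB Require Import structures.
From mathcomp Require Import all_boot all_algebra.
From mathcomp Require Import mpoly.
From mathcomp Require Import ring.
Set Implicit Arguments. Unset Strict Implicit. Unset Printing Implicit Defensive.
Import GRing.Theory.
Local Open Scope ring_scope.

Section Bihom.
Variable k : closedFieldType.
Implicit Types p q : {mpoly k[4]}.

Lemma bihomog0 i j : bihomog i j (0 : {mpoly k[4]}).
Proof. by rewrite /bihomog msupp0. Qed.

Lemma bihomogD i j p q : bihomog i j p -> bihomog i j q -> bihomog i j (p + q).
Proof.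
move=> /allP hp /allP hq; apply/allP => mo /msuppD_le.
by rewrite mem_cat => /orP[/hp|/hq].
Qed.

Lemma bihomogZ i j c p : bihomog i j p -> bihomog i j (c *: p).
Proof. by move=> /allP hp; apply/allP => mo /msuppZ_le /hp. Qed.

Lemma bihomogM i j i' j' p q : bihomog i j p -> bihomog i' j' q ->
  bihomog (i + i') (j + j') (p * q).
Proof.
move=> /allP hp /allP hq; apply/allP => mo /msuppM_le /allpairsP [[m1 m2] /= [H1 H2 ->]].
move: (hp _ H1) (hq _ H2) => /andP[/eqP a1 /eqP a2] /andP[/eqP b1 /eqP b2].
rewrite !mnmDE; apply/andP; split; apply/eqP.
- by rewrite -a1 -b1 addnACA.
- by rewrite -a2 -b2 addnACA.
Qed.

Lemma bihomogX i j n p : bihomog i j p -> bihomog (i * n) (j * n) (p ^+ n).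
Proof.
move=> hp; elim: n => [|n IH].
  by rewrite expr0 !muln0 /bihomog -mpolyX0 msuppX /= !mnm0E.
by rewrite exprS !mulnS; apply: bihomogM.
Qed.

Lemma bihomog_sum i j (I : Type) (r : seq I) (P : pred I) (F : I -> {mpoly k[4]}) :
  (forall x, P x -> bihomog i j (F x)) -> bihomog i j (\sum_(x <- r | P x) F x).
Proof.
move=> H; apply big_ind => //; [exact: bihomog0 | exact: bihomogD].
Qed.

Lemma bihomog_x0 : bihomog 1 0 (vx0 k). Proof. by rewrite /bihomog /vx0 msuppX /= !mnm1E. Qed.
Lemma bihomog_x1 : bihomog 1 0 (vx1 k). Proof. by rewrite /bihomog /vx1 msuppX /= !mnm1E. Qed.
Lemma bihomog_y0 : bihomog 0 1 (vy0 k). Proof. by rewrite /bihomog /vy0 msuppX /= !mnm1E. Qed.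
Lemma bihomog_y1 : bihomog 0 1 (vy1 k). Proof. by rewrite /bihomog /vy1 msuppX /= !mnm1E. Qed.

End Bihom.

Section Dim.
Variable k : closedFieldType.

Lemma dim_crit (I : {mpoly k[4]} -> Prop) i j n (b : 'I_n -> {mpoly k[4]})
    (Phi : {mpoly k[4]} -> 'I_n -> k) :
  (forall l, bihomog i j (b l)) ->
  (forall f g l, Phi (f + g) l = Phi f l + Phi g l) ->
  (forall c f l, Phi (c *: f) l = c * Phi f l) ->
  (forall f, I f -> forall l, Phi f l = 0) ->
  (forall l l', Phi (b l) l' = (l == l')%:R) ->
  (forall f, bihomog i j f -> I (f - \sum_l Phi f l *: b l)) ->
  quot_dim_is I i j n.
Proof.
move=> hb hD hZ h1 h2 h3.
have Phi0 l : Phi 0 l = 0.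
  by have := hZ 0 0 l; rewrite scale0r mul0r.
have Phisum l n' (c : 'I_n' -> k) (g : 'I_n' -> {mpoly k[4]}) :
    Phi (\sum_(x < n') c x *: g x) l = \sum_(x < n') c x * Phi (g x) l.
  rewrite (big_morph (fun f => Phi f l) (fun f g => hD f g l) (Phi0 l)).
  by apply: eq_bigr => x _; rewrite hZ.
split.
  exists b; split => // c Hc l; have := h1 _ Hc l; rewrite Phisum.
  rewrite (bigD1 l) //= h2 eqxx mulr1 big1 ?addr0 // => x hx.
  by rewrite h2 (negbTE hx) mulr0.
move=> f hf Hind.
pose A : 'M[k]_(n.+1, n) := \matrix_(l, l') Phi (f l) l'.
pose K := kermx A.
have KA : K *m A = 0 by apply: mulmx_ker.
have Kn0 : K != 0.
  rewrite kermx_eq0; apply/negP => /row_freeP [X AX].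
  have := mxrankM_maxl A X; rewrite AX mxrank1 => /leq_trans /(_ (rank_leq_col A)).
  by rewrite ltnn.
case: (pickP (fun p : 'I_n.+1 * 'I_n.+1 => K p.1 p.2 != 0)) => [[l0 l1] /= hK|H0]; last first.
  move/eqP: Kn0; apply; apply/matrixP => x y.
  by move/negbFE/eqP: (H0 (x, y)) => /= ->; rewrite mxE.
have Ig : I (\sum_(l < n.+1) K l0 l *: f l).
  set g := \sum_(l < n.+1) K l0 l *: f l.
  have := h3 g (bihomog_sum _ (fun l _ => bihomogZ (K l0 l) (hf l))).
  suff -> : \sum_l Phi g l *: b l = 0 by rewrite subr0.
  rewrite big1 // => l' _; rewrite Phisum.
  have e : \sum_(l < n.+1) K l0 l * Phi (f l) l' = 0.
    have -> : \sum_(l < n.+1) K l0 l * Phi (f l) l' = (K *m A) l0 l'.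
      by rewrite [RHS]mxE; apply: eq_bigr => l _; rewrite [A _ _]mxE.
    by rewrite KA mxE.
  by rewrite e scale0r.
by move: hK; rewrite (Hind _ Ig l1) eqxx.
Qed.

Lemma dim_crit_fin (I : {mpoly k[4]} -> Prop) i j (T : finType) (P : pred T)
    (b : T -> {mpoly k[4]}) (Phi : {mpoly k[4]} -> T -> k) :
  (forall x, P x -> bihomog i j (b x)) ->
  (forall f g x, Phi (f + g) x = Phi f x + Phi g x) ->
  (forall c f x, Phi (c *: f) x = c * Phi f x) ->
  (forall f, I f -> forall x, Phi f x = 0) ->
  (forall x y, P x -> P y -> Phi (b x) y = (x == y)%:R) ->
  (forall f, bihomog i j f -> I (f - \sum_(x | P x) Phi f x *: b x)) ->
  quot_dim_is I i j #|P|.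
Proof.
move=> hb hD hZ h1 h2 h3.
apply: (@dim_crit I i j #|P| (fun l => b (enum_val l)) (fun f l => Phi f (enum_val l))).
- by move=> l; apply: hb; exact: (enum_valP l).
- by move=> f g l; apply: hD.
- by move=> c f l; apply: hZ.
- by move=> f hf l; apply: h1.
- move=> l l'; rewrite h2; [|exact: (enum_valP l)|exact: (enum_valP l')].
  by rewrite (inj_eq enum_val_inj).
- move=> f hf; have := h3 f hf.
  by rewrite (eq_bigl (fun x => x \in P)) // (big_enum_val (A := P) (fun x => Phi f x *: b x)).
Qed.

End Dim.
From HB Require Import structures.
From mathcomp Require Import all_boot all_algebra.
From mathcomp Require Import mpoly.
From mathcomp Require Import ring.
Require Import Defs.
Set Implicit Arguments. Unset Strict Implicit. Unset Printing Implicit Defensive.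
Import GRing.Theory.
Local Open Scope ring_scope.

Section Main.
Variable k : closedFieldType.
Variables (s : nat) (r0 r1 : k) (q0 q1 : 'I_s -> k) (m : 'I_s -> nat).
Variables (e0 e1 z : k).
Hypothesis He : r1 * e0 - r0 * e1 = 1.
Hypothesis Hz : forall t, q1 t - q0 t * z != 0.

Notation x0 := (vx0 k). Notation x1 := (vx1 k).
Notation y0 := (vy0 k). Notation y1 := (vy1 k).
Definition L1 : {mpoly k[4]} := ptL1 r0 r1.
Definition W : {mpoly k[4]} := e0 *: x1 - e1 *: x0.
Definition N1 : {mpoly k[4]} := y0.
Definition N2 : {mpoly k[4]} := y1 - z *: y0.
Definition L2 t : {mpoly k[4]} := ptL2 (q0 t) (q1 t).
Definition lam t := q1 t - q0 t * z.
Definition rho t := q0 t / lam t.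

Definition vE (o : 'I_4) : {poly {poly k}} :=
  match nat_of_ord o with
  | 0 => r0%:P%:P + e0%:P%:P * 'X
  | 1 => r1%:P%:P + e1%:P%:P * 'X
  | 2 => ('X)%:P
  | _ => (1 + z%:P * 'X)%:P
  end.
Definition E (p : {mpoly k[4]}) : {poly {poly k}} := mmap (polyC \o polyC) vE p.

Lemma E_additive : additive E. Proof. exact: mmap_is_additive. Qed.
Lemma ED p q : E (p + q) = E p + E q. Proof. exact: mmapD. Qed.
Lemma EB p q : E (p - q) = E p - E q. Proof. exact: mmapB. Qed.
Lemma EZ c p : E (c *: p) = c%:P%:P * E p. Proof. exact: mmapZ. Qed.
Lemma EM p q : E (p * q) = E p * E q. Proof. by rewrite /E rmorphM. Qed.
Lemma EX p n : E (p ^+ n) = E p ^+ n. Proof. by rewrite /E rmorphXn. Qed.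
Lemma E1 : E 1 = 1. Proof. by rewrite /E rmorph1. Qed.
Lemma E0 : E 0 = 0. Proof. exact: mmap0. Qed.
Lemma E_sum (I : Type) (r : seq I) (P : pred I) (F : I -> {mpoly k[4]}) :
  E (\sum_(x <- r | P x) F x) = \sum_(x <- r | P x) E (F x).
Proof. by rewrite /E raddf_sum. Qed.

Lemma Ex0 : E x0 = r0%:P%:P + e0%:P%:P * 'X. Proof. by rewrite /E /vx0 mmapX mmap1U. Qed.
Lemma Ex1 : E x1 = r1%:P%:P + e1%:P%:P * 'X. Proof. by rewrite /E /vx1 mmapX mmap1U. Qed.
Lemma Ey0 : E y0 = ('X)%:P. Proof. by rewrite /E /vy0 mmapX mmap1U. Qed.
Lemma Ey1 : E y1 = (1 + z%:P * 'X)%:P. Proof. by rewrite /E /vy1 mmapX mmap1U. Qed.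

Lemma EL1 : E L1 = 'X.
Proof.
rewrite /L1 /ptL1 EB !EZ Ex0 Ex1.
have -> : r1%:P%:P * (r0%:P%:P + e0%:P%:P * 'X) - r0%:P%:P * (r1%:P%:P + e1%:P%:P * 'X)
   = ((r1 * e0 - r0 * e1)%:P%:P * 'X : {poly {poly k}}).
  by rewrite !rmorphB !rmorphM /=; ring.
by rewrite He mul1r.
Qed.

Lemma EW : E W = 1.
Proof.
rewrite /W EB !EZ Ex0 Ex1.
have -> : e0%:P%:P * (r1%:P%:P + e1%:P%:P * 'X) - e1%:P%:P * (r0%:P%:P + e0%:P%:P * 'X)
   = ((r1 * e0 - r0 * e1)%:P%:P : {poly {poly k}}).
  by rewrite !rmorphB !rmorphM /=; ring.
by rewrite He.
Qed.

Lemma EN1 : E N1 = ('X)%:P. Proof. exact: Ey0. Qed.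
Lemma EN2 : E N2 = 1.
Proof. rewrite /N2 EB EZ Ey0 Ey1 -!rmorphM -rmorphB /=; congr (_%:P); ring. Qed.

Lemma EL2 t : E (L2 t) = (lam t *: ('X - (rho t)%:P))%:P.
Proof.
rewrite /L2 /ptL2 EB !EZ Ey0 Ey1 -!rmorphM -rmorphB /=; congr (_%:P).
have hl : lam t * rho t = q0 t by rewrite /rho mulrC divfK ?Hz.
rewrite -mul_polyC mulrBr -polyCM hl /lam.
rewrite !rmorphB /=; ring.
Qed.


Lemma sum_delta (V : lmodType k) (F : nat -> V) n x : (x < n)%N ->
  \sum_(y < n) ((y : nat) == x)%:R *: F y = F x.
Proof.
move=> hx; rewrite (bigD1 (Ordinal hx)) //= eqxx scale1r big1 ?addr0 //.
move=> y /eqP hy; case: eqP => [e|_]; last by rewrite scale0r.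
by exfalso; apply: hy; apply: val_inj.
Qed.

Definition B ii jj h l : {mpoly k[4]} := L1 ^+ h * W ^+ (ii - h) * N1 ^+ l * N2 ^+ (jj - l).
Definition D ii jj (f : {mpoly k[4]}) := exists C : nat -> nat -> k,
  f = \sum_(h < ii.+1) \sum_(l < jj.+1) C h l *: B ii jj h l.

Lemma D0 ii jj : D ii jj 0.
Proof. by exists (fun _ _ => 0); rewrite big1 // => h _; rewrite big1 // => l _; rewrite scale0r. Qed.

Lemma DD ii jj f g : D ii jj f -> D ii jj g -> D ii jj (f + g).
Proof.
move=> [C ->] [C' ->]; exists (fun h l => C h l + C' h l).
rewrite -big_split /=; apply: eq_bigr => h _; rewrite -big_split /=.
by apply: eq_bigr => l _; rewrite scalerDl.
Qed.

Lemma DZ ii jj c f : D ii jj f -> D ii jj (c *: f).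
Proof.
move=> [C ->]; exists (fun h l => c * C h l).
rewrite scaler_sumr; apply: eq_bigr => h _; rewrite scaler_sumr.
by apply: eq_bigr => l _; rewrite scalerA.
Qed.

Lemma Dsum ii jj (I : Type) (r : seq I) (P : pred I) (F : I -> {mpoly k[4]}) :
  (forall x, P x -> D ii jj (F x)) -> D ii jj (\sum_(x <- r | P x) F x).
Proof. move=> H; apply big_ind => //; [exact: D0 | exact: DD]. Qed.

Lemma DB ii jj h l : (h <= ii)%N -> (l <= jj)%N -> D ii jj (B ii jj h l).
Proof.
move=> hh hl; exists (fun h' l' => ((h' == h) && (l' == l))%:R).
have -> : B ii jj h l = \sum_(h' < ii.+1) ((h' : nat) == h)%:R *: B ii jj h' l.
  by symmetry; apply: (@sum_delta _ (fun h' => B ii jj h' l)); rewrite ltnS.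
apply: eq_bigr => h' _.
have -> : B ii jj h' l = \sum_(l' < jj.+1) ((l' : nat) == l)%:R *: B ii jj h' l'.
  by symmetry; apply: (@sum_delta _ (fun l' => B ii jj h' l')); rewrite ltnS.
rewrite scaler_sumr; apply: eq_bigr => l' _.
by rewrite scalerA -natrM mulnb.
Qed.

Lemma Dmul ii jj ii' jj' (g : {mpoly k[4]}) f (sh sl : nat -> nat) :
  (forall h l, (h <= ii)%N -> (l <= jj)%N -> g * B ii jj h l = B ii' jj' (sh h) (sl l)) ->
  (forall h, (h <= ii)%N -> (sh h <= ii')%N) ->
  (forall l, (l <= jj)%N -> (sl l <= jj')%N) ->
  D ii jj f -> D ii' jj' (g * f).
Proof.
move=> Hg Hh Hl [C ->]; rewrite mulr_sumr; apply: Dsum => h _.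
rewrite mulr_sumr; apply: Dsum => l _; rewrite -scalerAr; apply: DZ.
have hh : (h <= ii)%N by rewrite -ltnS.
have hl : (l <= jj)%N by rewrite -ltnS.
by rewrite (Hg _ _ hh hl); apply: DB; [apply: Hh | apply: Hl].
Qed.

Lemma DmulL1 ii jj f : D ii jj f -> D ii.+1 jj (L1 * f).
Proof.
apply: (@Dmul _ _ _ _ _ _ S id) => // h l hh hl.
by rewrite /B subSS !mulrA -exprS.
Qed.

Lemma DmulW ii jj f : D ii jj f -> D ii.+1 jj (W * f).
Proof.
apply: (@Dmul _ _ _ _ _ _ id id) => // [h l hh hl|h hh]; last exact: leqW.
rewrite /B subSn // exprS; move: L1 W N1 N2 => A1 A2 A3 A4; ring.
Qed.

Lemma DmulN1 ii jj f : D ii jj f -> D ii jj.+1 (N1 * f).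
Proof.
apply: (@Dmul _ _ _ _ _ _ id S) => // h l hh hl.
rewrite /B subSS exprS; move: L1 W N1 N2 => A1 A2 A3 A4; ring.
Qed.

Lemma DmulN2 ii jj f : D ii jj f -> D ii jj.+1 (N2 * f).
Proof.
apply: (@Dmul _ _ _ _ _ _ id id) => // [h l hh hl|l hl]; last exact: leqW.
rewrite /B subSn // exprS; move: L1 W N1 N2 => A1 A2 A3 A4; ring.
Qed.

Lemma x0E : x0 = e0 *: L1 + r0 *: W.
Proof.
have -> : e0 *: L1 + r0 *: W = (r1 * e0 - r0 * e1)%:MP * x0.
  rewrite /L1 /ptL1 /W -!mul_mpolyC rmorphB !rmorphM /=; move: x0 x1 => A B; ring.
by rewrite He mul1r.
Qed.

Lemma x1E : x1 = e1 *: L1 + r1 *: W.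
Proof.
have -> : e1 *: L1 + r1 *: W = (r1 * e0 - r0 * e1)%:MP * x1.
  rewrite /L1 /ptL1 /W -!mul_mpolyC rmorphB !rmorphM /=; move: x0 x1 => A B; ring.
by rewrite He mul1r.
Qed.

Lemma y1E : y1 = N2 + z *: N1.
Proof. by rewrite /N2 /N1 subrK. Qed.

Lemma Dx0 ii jj f : D ii jj f -> D ii.+1 jj (x0 * f).
Proof.
move=> hf; rewrite x0E mulrDl -!scalerAl; apply: DD; apply: DZ;
  [exact: DmulL1 | exact: DmulW].
Qed.
Lemma Dx1 ii jj f : D ii jj f -> D ii.+1 jj (x1 * f).
Proof.
move=> hf; rewrite x1E mulrDl -!scalerAl; apply: DD; apply: DZ;
  [exact: DmulL1 | exact: DmulW].
Qed.
Lemma Dy0 ii jj f : D ii jj f -> D ii jj.+1 (y0 * f).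
Proof. exact: DmulN1. Qed.
Lemma Dy1 ii jj f : D ii jj f -> D ii jj.+1 (y1 * f).
Proof.
move=> hf; rewrite y1E mulrDl -!scalerAl; apply: DD; [exact: DmulN2|].
by apply: DZ; apply: DmulN1.
Qed.

Lemma Dpow (g : {mpoly k[4]}) (di dj : nat) :
  (forall ii jj f, D ii jj f -> D (ii + di) (jj + dj) (g * f)) ->
  forall a ii jj f, D ii jj f -> D (ii + di * a) (jj + dj * a) (g ^+ a * f).
Proof.
move=> Hg; elim=> [|a IH] ii jj f hf; first by rewrite !muln0 !addn0 mul1r.
rewrite exprS -mulrA !mulnSr !addnA; apply: Hg; exact: IH.
Qed.

Lemma D1 : D 0 0 1.
Proof. have := @DB 0 0 0 0 (leqnn _) (leqnn _); by rewrite /B !expr0 !mulr1. Qed.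

Lemma Xmono (mo : 'X_{1..4}) : 'X_[mo] =
  x0 ^+ mo (@Ordinal 4 0 isT) * (x1 ^+ mo (@Ordinal 4 1 isT) *
  (y0 ^+ mo (@Ordinal 4 2 isT) * (y1 ^+ mo (@Ordinal 4 3 isT) * 1))) :> {mpoly k[4]}.
Proof.
rewrite mpolyXE_id !big_ord_recl big_ord0 /vx0 /vx1 /vy0 /vy1.
congr (_ * (_ * (_ * (_ * _)))); by congr (mpolyX _ _ ^+ mo _); apply: val_inj.
Qed.

Lemma bihomog_D ii jj f : bihomog ii jj f -> D ii jj f.
Proof.
move=> /allP hf; rewrite (mpolyE f) big_seq; apply: Dsum => mo /hf /andP[/eqP h1 /eqP h2].
apply: DZ; rewrite Xmono.
have Hx0 := @Dpow x0 1 0 (fun ii jj f h => eq_ind _ (fun u => D u _ _) (eq_ind _ (fun u => D _ u _) (Dx0 h) _ (esym (addn0 jj))) _ (esym (addn1 ii))).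
have Hx1 := @Dpow x1 1 0 (fun ii jj f h => eq_ind _ (fun u => D u _ _) (eq_ind _ (fun u => D _ u _) (Dx1 h) _ (esym (addn0 jj))) _ (esym (addn1 ii))).
have Hy0 := @Dpow y0 0 1 (fun ii jj f h => eq_ind _ (fun u => D u _ _) (eq_ind _ (fun u => D _ u _) (Dy0 h) _ (esym (addn1 jj))) _ (esym (addn0 ii))).
have Hy1 := @Dpow y1 0 1 (fun ii jj f h => eq_ind _ (fun u => D u _ _) (eq_ind _ (fun u => D _ u _) (Dy1 h) _ (esym (addn1 jj))) _ (esym (addn0 ii))).
have := Hx0 (mo (@Ordinal 4 0 isT)) _ _ _ (Hx1 (mo (@Ordinal 4 1 isT)) _ _ _
   (Hy0 (mo (@Ordinal 4 2 isT)) _ _ _ (Hy1 (mo (@Ordinal 4 3 isT)) _ _ _ D1))).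
by rewrite !mul1n !mul0n !addn0 !add0n [X in D X]addnC [X in D _ X]addnC h1 h2.
Qed.


Hypothesis Hdist : forall t u, t != u -> q0 t * q1 u - q1 t * q0 u != 0.

Lemma q0E t : q0 t = rho t * lam t.
Proof. by rewrite /rho divfK ?Hz. Qed.

Lemma rho_inj t u : rho t = rho u -> t = u.
Proof.
move=> H; case: (eqVneq t u) => // ne; exfalso; move: (Hdist ne).
have -> : q0 t * q1 u - q1 t * q0 u = q0 t * lam u - q0 u * lam t.
  rewrite /lam; move: (q0 t) (q1 u) (q1 t) (q0 u) => A B C D'; ring.
by rewrite (q0E t) (q0E u) H mulrAC subrr eqxx.
Qed.

Definition Pp h : {poly k} := \prod_(t < s) ('X - (rho t)%:P) ^+ (m t - h).
Definition a h := (\sum_(t < s) (m t - h))%N.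

Lemma Pp_gen_dvd h (G : {poly k}) (r : seq 'I_s) : uniq r ->
  (forall t, ('X - (rho t)%:P) ^+ (m t - h) %| G) ->
  \prod_(t <- r) ('X - (rho t)%:P) ^+ (m t - h) %| G.
Proof.
move=> + H; elim: r => [|t r IH] /=; first by rewrite big_nil dvd1p.
move=> /andP[tr ur]; rewrite big_cons Gauss_dvdp ?H ?IH //.
apply: coprimep_expl; rewrite coprimep_sym coprimep_XsubC /root horner_prod.
rewrite prodf_seq_neq0; apply/allP => u ur' /=; rewrite horner_exp hornerXsubC.
apply: expf_neq0; rewrite subr_eq0; apply/negP => /eqP /rho_inj tu.
by move: tr; rewrite tu ur'.
Qed.

Lemma Pp_dvd h (G : {poly k}) :
  (forall t, ('X - (rho t)%:P) ^+ (m t - h) %| G) -> Pp h %| G.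
Proof. by move=> H; apply: Pp_gen_dvd => //; apply: index_enum_uniq. Qed.

Lemma size_Pp_gen h (r : seq 'I_s) :
  size (\prod_(t <- r) ('X - (rho t)%:P) ^+ (m t - h)) = (\sum_(t <- r) (m t - h)).+1.
Proof.
elim: r => [|t r IH]; first by rewrite !big_nil size_poly1.
rewrite !big_cons size_Mmonic ?IH ?size_exp_XsubC //.
- by rewrite addSn addnS.
- by apply: expf_neq0; rewrite polyXsubC_eq0.
- by apply: monic_prod => u _; apply: monic_exp; apply: monicXsubC.
Qed.

Lemma size_Pp h : size (Pp h) = (a h).+1.
Proof. exact: size_Pp_gen. Qed.

Lemma Pp_neq0 h : Pp h != 0.
Proof. by rewrite -size_poly_eq0 size_Pp. Qed.

Definition Hh d (F : {poly k}) : {mpoly k[4]} :=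
  \sum_(l < d.+1) F`_l *: (N1 ^+ l * N2 ^+ (d - l)).

Lemma HhD d (F G : {poly k}) : Hh d (F + G) = Hh d F + Hh d G.
Proof. by rewrite /Hh -big_split; apply: eq_bigr => l _; rewrite coefD scalerDl. Qed.

Lemma HhZ d c (F : {poly k}) : Hh d (c *: F) = c *: Hh d F.
Proof. by rewrite /Hh scaler_sumr; apply: eq_bigr => l _; rewrite coefZ scalerA. Qed.

Lemma HhN d (F : {poly k}) : Hh d (- F) = - Hh d F.
Proof. by rewrite -scaleN1r HhZ scaleN1r. Qed.

Lemma HhB d (F G : {poly k}) : Hh d (F - G) = Hh d F - Hh d G.
Proof. by rewrite HhD HhN. Qed.

Lemma Hh0 d : Hh d 0 = 0.
Proof. by rewrite /Hh big1 // => l _; rewrite coef0 scale0r. Qed.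

Lemma HhXM d (F : {poly k}) : (size F <= d.+1)%N -> Hh d.+1 ('X * F) = N1 * Hh d F.
Proof.
move=> hF; rewrite /Hh big_ord_recl coefXM eqxx scale0r add0r mulr_sumr.
apply: eq_bigr => l _; rewrite coefXM /= add0n /bump /= add1n subSS -scalerAr exprS mulrA.
by [].
Qed.

Lemma HhS d (F : {poly k}) : (size F <= d.+1)%N -> Hh d.+1 F = N2 * Hh d F.
Proof.
move=> hF; rewrite /Hh big_ord_recr /= nth_default // scale0r addr0 mulr_sumr.
apply: eq_bigr => l _; rewrite /= -scalerAr subSn; last by rewrite -ltnS.
by rewrite exprS; congr (_ *: _); move: N1 N2 => A B'; ring.
Qed.

Lemma Hh_lin d (F : {poly k}) c : (size F <= d.+1)%N ->
  Hh d.+1 (F * ('X - c%:P)) = Hh d F * (N1 - c *: N2).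
Proof.
move=> hF; rewrite mulrBr mulrC [F * _]mulrC mul_polyC HhB HhXM // HhZ HhS //.
rewrite -!mul_mpolyC; move: (Hh d F) N1 N2 => A B' C'; ring.
Qed.

Lemma size_mulXpow (F : {poly k}) d c n : (size F <= d.+1)%N ->
  (size (F * ('X - c%:P) ^+ n)%R <= (d + n).+1)%N.
Proof.
move=> hF; apply: leq_trans (size_polyMleq _ _) _; rewrite size_exp_XsubC.
by rewrite addnS /= -addSn leq_add2r.
Qed.

Lemma Hh_pow d (F : {poly k}) c n : (size F <= d.+1)%N ->
  Hh (d + n) (F * ('X - c%:P) ^+ n) = Hh d F * (N1 - c *: N2) ^+ n.
Proof.
move=> hF; elim: n => [|n IH]; first by rewrite addn0 !expr0 !mulr1.
rewrite addnS !exprSr !mulrA Hh_lin ?IH //; exact: size_mulXpow.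
Qed.

Lemma Hh_prod h (r : seq 'I_s) d (F : {poly k}) : (size F <= d.+1)%N ->
  Hh (d + \sum_(t <- r) (m t - h)) (F * \prod_(t <- r) ('X - (rho t)%:P) ^+ (m t - h))
  = Hh d F * \prod_(t <- r) (N1 - rho t *: N2) ^+ (m t - h).
Proof.
elim: r d F => [|t r IH] d F hF; first by rewrite !big_nil addn0 !mulr1.
rewrite !big_cons addnA !mulrA IH ?Hh_pow //; exact: size_mulXpow.
Qed.

Lemma L2E t : L2 t = lam t *: (N1 - rho t *: N2).
Proof.
rewrite /L2 /ptL2 scalerBr scalerA [lam t * _]mulrC -q0E /N2 /N1 /lam.
rewrite -!mul_mpolyC !rmorphB !rmorphM /=; move: y0 y1 => A B'; ring.
Qed.

Lemma HhB_sum ii jj (C : nat -> nat -> k) h :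
  \sum_(l < jj.+1) C h l *: B ii jj h l =
  L1 ^+ h * W ^+ (ii - h) * Hh jj (\poly_(l < jj.+1) C h l).
Proof.
rewrite /Hh mulr_sumr; apply: eq_bigr => l _.
by rewrite coef_poly ltn_ord /B -scalerAr !mulrA.
Qed.

Lemma E_B ii jj h l : E (B ii jj h l) = 'X^h * ('X^l)%:P.
Proof.
by rewrite /B !EM !EX EL1 EW EN1 EN2 !expr1n !mulr1 rmorphXn.
Qed.

Lemma E_Dsum ii jj (C : nat -> nat -> k) :
  E (\sum_(h < ii.+1) \sum_(l < jj.+1) C h l *: B ii jj h l) =
  \poly_(h < ii.+1) \poly_(l < jj.+1) C h l.
Proof.
rewrite E_sum poly_def; apply: eq_bigr => h _.
rewrite E_sum -mul_polyC poly_def rmorph_sum mulr_suml; apply: eq_bigr => l _.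
rewrite EZ E_B -mul_polyC rmorphM /=; move: ('X^h) (('X^l)%:P) => A B'; ring.
Qed.

Lemma coef_E_Dsum ii jj (C : nat -> nat -> k) h :
  (E (\sum_(h < ii.+1) \sum_(l < jj.+1) C h l *: B ii jj h l))`_h =
  if (h < ii.+1)%N then \poly_(l < jj.+1) C h l else 0.
Proof. by rewrite E_Dsum coef_poly. Qed.

Lemma E_in_pt t f h : in_pt_ideal_pow r0 r1 (q0 t) (q1 t) (m t) f ->
  ('X - (rho t)%:P) ^+ (m t - h) %| (E f)`_h.
Proof.
case=> g ->; rewrite E_sum coef_sum.
apply: (big_ind (fun x => ('X - (rho t)%:P) ^+ (m t - h) %| x)); first exact: dvdp0.
  by move=> ? ? ? ?; apply: dvdp_add.
move=> u _; rewrite !EM !EX.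
have -> : ptL1 r0 r1 = L1 by []. have -> : ptL2 (q0 t) (q1 t) = L2 t by [].
rewrite EL1 EL2 -rmorphXn coefMC coefMXn.
case: ifP => hu; first by rewrite mul0r dvdp0.
apply: dvdp_mull; rewrite exprZn dvdpZr; last by apply: expf_neq0; exact: Hz.
by apply: dvdp_exp2l; apply: leq_sub2l; rewrite leqNgt hu.
Qed.

Lemma E_fat f h : fat_ideal r0 r1 q0 q1 m f -> Pp h %| (E f)`_h.
Proof. by move=> H; apply: Pp_dvd => t; apply: E_in_pt. Qed.

Lemma in_pt0 a0 a1 b0 b1 mm : in_pt_ideal_pow a0 a1 b0 b1 mm (0 : {mpoly k[4]}).
Proof. by exists (fun _ => 0); rewrite big1 // => u _; rewrite !mul0r. Qed.

Lemma in_ptD a0 a1 b0 b1 mm (f g : {mpoly k[4]}) :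
  in_pt_ideal_pow a0 a1 b0 b1 mm f -> in_pt_ideal_pow a0 a1 b0 b1 mm g ->
  in_pt_ideal_pow a0 a1 b0 b1 mm (f + g).
Proof.
move=> [F ->] [G ->]; exists (fun u => F u + G u).
by rewrite -big_split; apply: eq_bigr => u _; rewrite !mulrDl.
Qed.

Lemma in_ptZ a0 a1 b0 b1 mm c (f : {mpoly k[4]}) :
  in_pt_ideal_pow a0 a1 b0 b1 mm f -> in_pt_ideal_pow a0 a1 b0 b1 mm (c *: f).
Proof.
move=> [F ->]; exists (fun u => c *: F u).
by rewrite scaler_sumr; apply: eq_bigr => u _; rewrite !scalerAl.
Qed.

Lemma in_pt_mono a0 a1 b0 b1 mm (g : {mpoly k[4]}) u :
  in_pt_ideal_pow a0 a1 b0 b1 mm (g * ptL1 a0 a1 ^+ u * ptL2 b0 b1 ^+ (mm - u)).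
Proof.
case: (leqP u mm) => hu.
  have hu' : (u < mm.+1)%N by rewrite ltnS.
  exists (fun v => if (v : nat) == u then g else 0).
  rewrite (bigD1 (Ordinal hu')) //= eqxx big1 ?addr0 // => v /eqP hv.
  case: eqP => [e|]; last by rewrite !mul0r.
  by exfalso; apply: hv; apply: val_inj.
have hm : (mm < mm.+1)%N by [].
exists (fun v => if (v : nat) == mm then g * ptL1 a0 a1 ^+ (u - mm) else 0).
rewrite (bigD1 (Ordinal hm)) //= eqxx big1 ?addr0; last first.
  move=> v /eqP hv; case: eqP => [e|]; last by rewrite !mul0r.
  by exfalso; apply: hv; apply: val_inj.
have -> : (mm - u = 0)%N by apply/eqP; rewrite subn_eq0 ltnW.
by rewrite subnn -[g * _ * ptL1 a0 a1 ^+ mm]mulrA -exprD subnK // ltnW.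
Qed.

Lemma fat0 : fat_ideal r0 r1 q0 q1 m 0.
Proof. by move=> t; apply: in_pt0. Qed.
Lemma fatD f g : fat_ideal r0 r1 q0 q1 m f -> fat_ideal r0 r1 q0 q1 m g ->
  fat_ideal r0 r1 q0 q1 m (f + g).
Proof. by move=> hf hg t; apply: in_ptD. Qed.
Lemma fatZ c f : fat_ideal r0 r1 q0 q1 m f -> fat_ideal r0 r1 q0 q1 m (c *: f).
Proof. by move=> hf t; apply: in_ptZ. Qed.
Lemma fat_sum (I : Type) (r : seq I) (P : pred I) (F : I -> {mpoly k[4]}) :
  (forall x, P x -> fat_ideal r0 r1 q0 q1 m (F x)) ->
  fat_ideal r0 r1 q0 q1 m (\sum_(x <- r | P x) F x).
Proof. move=> H; apply big_ind => //; [exact: fat0 | exact: fatD]. Qed.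

Lemma N1rho t : N1 - rho t *: N2 = (lam t)^-1 *: L2 t.
Proof. by rewrite L2E scalerA mulVf ?Hz // scale1r. Qed.

Lemma fat_term ii jj h (F : {poly k}) : (size F <= jj.+1)%N ->
  fat_ideal r0 r1 q0 q1 m (L1 ^+ h * W ^+ (ii - h) * Hh jj (F %/ Pp h * Pp h)).
Proof.
move=> hF; set Q := F %/ Pp h.
have hQ : size Q = (size F - a h)%N by rewrite size_divp ?Pp_neq0 // size_Pp.
case: (leqP (a h) jj) => ha; last first.
  have -> : Q = 0.
    apply/eqP; rewrite -size_poly_eq0 hQ subn_eq0; apply: leq_trans hF _; exact: ha.
  by rewrite mul0r Hh0 mulr0; exact: fat0.
have hQ' : (size Q <= (jj - a h).+1)%N.
  by rewrite hQ -subSn // leq_sub2r.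
have -> : jj = (jj - a h + \sum_(t <- index_enum 'I_s) (m t - h))%N.
  by rewrite subnK.
rewrite /Pp Hh_prod // => u.
rewrite (bigD1 u) //= N1rho exprZn.
set G := Hh _ Q; set R := \prod_(t | _) _.
have -> : L1 ^+ h * W ^+ (ii - h) * (G * ((lam u)^-1 ^+ (m u - h) *: L2 u ^+ (m u - h) * R))
  = ((lam u)^-1 ^+ (m u - h)) *: ((W ^+ (ii - h) * G * R) * L1 ^+ h * L2 u ^+ (m u - h)).
  rewrite -!mul_mpolyC; move: (L1 ^+ h) (W ^+ (ii - h)) G (L2 u ^+ (m u - h)) R => A1 A2 A3 A4 A5.
  by ring.
by apply: in_ptZ; apply: in_pt_mono.
Qed.

Lemma span_lemma ii jj f : bihomog ii jj f ->
  fat_ideal r0 r1 q0 q1 m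
    (f - \sum_(h < ii.+1) L1 ^+ h * W ^+ (ii - h) * Hh jj ((E f)`_h %% Pp h)).
Proof.
move=> /bihomog_D [C Cdef].
have Ef h : (h < ii.+1)%N -> (E f)`_h = \poly_(l < jj.+1) C h l.
  by move=> hh; rewrite Cdef coef_E_Dsum hh.
have -> : \sum_(h < ii.+1) L1 ^+ h * W ^+ (ii - h) * Hh jj ((E f)`_h %% Pp h)
   = \sum_(h < ii.+1) L1 ^+ h * W ^+ (ii - h) * Hh jj ((\poly_(l < jj.+1) C h l) %% Pp h).
  by apply: eq_bigr => h _; rewrite Ef.
have -> : f = \sum_(h < ii.+1) L1 ^+ h * W ^+ (ii - h) * Hh jj (\poly_(l < jj.+1) C h l).
  by rewrite Cdef; apply: eq_bigr => h _; rewrite HhB_sum.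
rewrite -sumrB; apply: fat_sum => h _.
rewrite -mulrBr -HhB.
have {1}-> : \poly_(l < jj.+1) C h l = (\poly_(l < jj.+1) C h l) %/ Pp h * Pp h
   + (\poly_(l < jj.+1) C h l) %% Pp h by apply: divp_eq.
rewrite addrK; apply: fat_term; exact: size_poly.
Qed.

Definition Mx := (\max_(t < s) m t)%N.

Lemma a_zero h : (Mx <= h)%N -> a h = 0%N.
Proof.
move=> hh; apply/eqP; rewrite sum_nat_eq0; apply/forallP => t; apply/implyP => _.
rewrite subn_eq0; apply: leq_trans hh; rewrite /Mx; exact: (@leq_bigmax _ (fun t0 => m t0) t).
Qed.

Lemma size_modPp h (F : {poly k}) : (size (F %% Pp h)%R <= a h)%N.
Proof. by have := ltn_modp F (Pp h); rewrite Pp_neq0 size_Pp ltnS. Qed.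

Lemma bihomogB i j (p q : {mpoly k[4]}) : bihomog i j p -> bihomog i j q -> bihomog i j (p - q).
Proof. by move=> hp hq; apply: bihomogD => //; rewrite -scaleN1r; apply: bihomogZ. Qed.

Lemma bihomog_B ii jj h l : (h <= ii)%N -> (l <= jj)%N -> bihomog ii jj (B ii jj h l).
Proof.
move=> hh hl.
have hL1 : bihomog 1 0 L1 by apply: bihomogB; apply: bihomogZ; [exact: bihomog_x0|exact: bihomog_x1].
have hW : bihomog 1 0 W by apply: bihomogB; apply: bihomogZ; [exact: bihomog_x1|exact: bihomog_x0].
have hN1 : bihomog 0 1 N1 by exact: bihomog_y0.
have hN2 : bihomog 0 1 N2 by apply: bihomogB; [exact: bihomog_y1| apply: bihomogZ; exact: bihomog_y0].
have := bihomogM (bihomogM (bihomogM (bihomogX h hL1) (bihomogX (ii - h) hW))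
   (bihomogX l hN1)) (bihomogX (jj - l) hN2).
by rewrite !mul1n !mul0n !addn0 !add0n subnKC // subnKC.
Qed.

Definition Phi (f : {mpoly k[4]}) (x : nat * nat) : k := ((E f)`_x.1 %% Pp x.1)`_x.2.

Lemma PhiD f g x : Phi (f + g) x = Phi f x + Phi g x.
Proof. by rewrite /Phi ED coefD modpD coefD. Qed.

Lemma PhiZ c f x : Phi (c *: f) x = c * Phi f x.
Proof. by rewrite /Phi EZ coefCM mul_polyC modpZl coefZ. Qed.

Lemma Phi_fat f x : fat_ideal r0 r1 q0 q1 m f -> Phi f x = 0.
Proof. by move=> hf; rewrite /Phi modp_eq0 ?coef0 //; apply: E_fat. Qed.

Lemma Phi_B ii jj h l h' l' : (l < a h)%N ->
  Phi (B ii jj h l) (h', l') = ((h == h') && (l == l'))%:R.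
Proof.
move=> hl; rewrite /Phi /= E_B coefXnM.
case: (eqVneq h h') => [<-|ne].
  rewrite ltnn subnn coefC eqxx modp_small; last by rewrite size_polyXn size_Pp ltnS.
  by rewrite coefXn eq_sym.
have -> : (if (h' < h)%N then 0 else (('X^l)%:P)`_(h' - h)) = 0 :> {poly k}.
  case: ifP => // hh; rewrite coefC subn_eq0 leqNgt.
  have -> : (h < h')%N by rewrite ltn_neqAle ne leqNgt hh.
  by [].
by rewrite mod0p coef0.
Qed.

Lemma HhB_sum' ii jj h (F : {poly k}) :
  \sum_(l < jj.+1) F`_l *: B ii jj h l = L1 ^+ h * W ^+ (ii - h) * Hh jj F.
Proof.
rewrite /Hh mulr_sumr; apply: eq_bigr => l _.
by rewrite /B -scalerAr !mulrA.
Qed.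

Lemma main_sec (i j : nat) :
  hilb_is r0 r1 q0 q1 m i j (\sum_(h < minn i.+1 Mx) minn j.+1 (a h)).
Proof.
set H := minn i.+1 Mx; set w := fun h => minn j.+1 (a h).
pose P := [pred x : 'I_H * 'I_j.+1 | (x.2 < w x.1)%N].
have card : #|P| = (\sum_(h < H) w h)%N.
  rewrite -sum1_card (eq_bigl (fun x : 'I_H * 'I_j.+1 => xpredT x.1 && (x.2 < w x.1)%N)) //.
  rewrite -(pair_big_dep xpredT (fun (h : 'I_H) (l : 'I_j.+1) => (l < w h)%N) (fun _ _ => 1%N)).
  apply: eq_bigr => h _ /=.
  rewrite -(big_ord_widen _ (fun _ => 1%N)); first by rewrite sum1_card card_ord.
  exact: geq_minl.
rewrite -card /hilb_is.
apply: (@dim_crit_fin _ _ i j _ P (fun x => B i j x.1 x.2)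
          (fun f x => Phi f (nat_of_ord x.1, nat_of_ord x.2))).
- move=> [h l] /= _; apply: bihomog_B; last by rewrite -ltnS.
  by rewrite -ltnS; apply: leq_trans (ltn_ord h) _; exact: geq_minl.
- by move=> f g x; apply: PhiD.
- by move=> c f x; apply: PhiZ.
- by move=> f hf x; apply: Phi_fat.
- move=> [h l] [h' l'] /= hx hy; rewrite Phi_B; last first.
    by apply: leq_trans hx _; exact: geq_minr.
  by rewrite xpair_eqE.
move=> f hf; have := span_lemma hf.
suff -> : \sum_(x | P x) Phi f (nat_of_ord x.1, nat_of_ord x.2) *: B i j x.1 x.2 =
  \sum_(h < i.+1) L1 ^+ h * W ^+ (i - h) * Hh j ((E f)`_h %% Pp h) by [].
rewrite (eq_bigl (fun x : 'I_H * 'I_j.+1 => xpredT x.1 && (x.2 < w x.1)%N)) //.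
rewrite -(pair_big_dep xpredT (fun (h : 'I_H) (l : 'I_j.+1) => (l < w h)%N)
   (fun h l => Phi f (nat_of_ord h, nat_of_ord l) *: B i j h l)).
have inner (h : nat) : \sum_(l < j.+1 | (l < w h)%N) Phi f (h, nat_of_ord l) *: B i j h l
   = L1 ^+ h * W ^+ (i - h) * Hh j ((E f)`_h %% Pp h).
  rewrite -HhB_sum' big_mkcond; apply: eq_bigr => l _ /=.
  case: ifP => // hl; rewrite /Phi /= nth_default ?scale0r //.
  apply: leq_trans (size_modPp _ _) _; move: hl; rewrite ltn_min ltn_ord /= => /negbT.
  by rewrite -leqNgt.
rewrite (eq_bigr (fun h : 'I_H => L1 ^+ h * W ^+ (i - h) * Hh j ((E f)`_h %% Pp h))); last first.
  by move=> h _; apply: inner.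
rewrite (@big_ord_widen _ 0 +%R H i.+1 (fun h => L1 ^+ h * W ^+ (i - h) * Hh j ((E f)`_h %% Pp h))
   (geq_minl _ _)).
rewrite big_mkcond; apply: eq_bigr => h _ /=; case: ifP => // hH.
move: hH; rewrite ltn_min ltn_ord /= => /negbT; rewrite -leqNgt => hM.
have : size ((E f)`_h %% Pp h) == 0%N by rewrite -leqn0 -(a_zero hM) size_modPp.
by rewrite size_poly_eq0 => /eqP ->; rewrite Hh0 mulr0.
Qed.
End Main.

Lemma exists_e (k : closedFieldType) (r0 r1 : k) : P1pt r0 r1 ->
  exists e0 e1 : k, r1 * e0 - r0 * e1 = 1.
Proof.
case/orP => h.
  exists 0, (- r0^-1); by rewrite mulr0 sub0r mulrN opprK divff.
exists r1^-1, 0; by rewrite mulr0 subr0 divff.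
Qed.

Lemma exists_notin (k : closedFieldType) (sq : seq k) : exists z, z \notin sq.
Proof.
pose p : {poly k} := \prod_(x <- sq) ('X - x%:P) * 'X - 1.
have s1 : size (\prod_(x <- sq) ('X - x%:P) * 'X) = (size sq).+2.
  by rewrite size_mulX ?size_prod_XsubC // -size_poly_eq0 size_prod_XsubC.
have sp : size p = (size sq).+2.
  by rewrite /p size_polyDl s1 // size_opp size_poly1.
have : size p != 1%N by rewrite sp.
case/closed_rootP => x; rewrite /p /root !hornerE horner_prod => hx; exists x.
apply/negP => xs; move: hx; rewrite (big_rem x xs) /= hornerXsubC subrr mul0r !mul0r.
by rewrite sub0r oppr_eq0 oner_eq0.
Qed.

Lemma exists_z (k : closedFieldType) (s : nat) (q0 q1 : 'I_s -> k) :
  (forall t, P1pt (q0 t) (q1 t)) -> exists z, forall t, q1 t - q0 t * z != 0.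
Proof.
move=> hq; have [z hz] := exists_notin [seq q1 t / q0 t | t <- enum 'I_s].
exists z => t; case: (eqVneq (q0 t) 0) => h0.
  by rewrite h0 mul0r subr0; move: (hq t); rewrite /P1pt h0 eqxx.
apply/negP; rewrite subr_eq0 => /eqP e; move: hz; apply/negP; rewrite negbK.
apply/mapP; exists t; first by rewrite mem_enum.
by rewrite e [q0 t * z]mulrC mulfK.
Qed.

Local Close Scope ring_scope.

Theorem theorem2p2 (k : closedFieldType) (s : nat) (r0 r1 : k)
    (q0 q1 : 'I_s -> k) (m : 'I_s -> nat) :
  (0 < s)%N ->
  P1pt r0 r1 ->
  (forall t, P1pt (q0 t) (q1 t)) ->
  (forall t u, t != u -> P1distinct (q0 t) (q1 t) (q0 u) (q1 u)) ->
  (forall t, 0 < m t)%N ->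
  let M := (\max_(t < s) m t)%N in
  let a := fun h : nat => (\sum_(t < s) (m t - h))%N in
  forall i j : nat,
    hilb_is r0 r1 q0 q1 m i j (\sum_(h < minn i.+1 M) minn j.+1 (a h))%N.
Proof.
move=> _ hr hq hd _ M a0 i j.
have [e0 [e1 he]] := exists_e hr.
have [z hz] := exists_z hq.
exact: (@main_sec k s r0 r1 q0 q1 m e0 e1 z he hz hd i j).
Qed.
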